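(* Let $p,q$ be integers with $q\geqslant p>2$ and $p+q=n$, and let $T$ be an $n$-vertex tree whose vertex bipartition has parts of sizes $p$ and $q$. Then $\xi^{ee}(T)\leqslant\frac{5n-4}{6}$, with equality if and only if $T\cong P_2(p-1,q-1)$.
   Context: For a vertex $x$ of a connected graph $G$, $\varepsilon_G(x)$ is its eccentricity and $d_G(x)$ its degree; $\xi^{ee}(G)=\sum_{uv\in E(G)}\left(\frac{1}{\varepsilon_G(u)}+\frac{1}{\varepsilon_G(v)}\right)=\sum_{x}\frac{d_G(x)}{\varepsilon_G(x)}$. A tree has a $(p,q)$-bipartition if its vertex set splits into two independent sets of sizes $p$ and $q$. $P_2(a,b)$ is the tree on $a+b+2$ vertices obtained from an edge $xy$ by attaching $a$ pendant vertices to $x$ and $b$ pendant vertices to $y$. *)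

(* Defs.v *)
From mathcomp Require Import all_boot all_order all_algebra.
Set Implicit Arguments. Unset Strict Implicit. Unset Printing Implicit Defensive.
Import Order.TTheory GRing.Theory Num.Theory.

Section Graphs.
Variable T : finType.
Variable e : rel T.

Definition simple_graph := symmetric e /\ irreflexive e.

Fixpoint ball (k : nat) (x : T) : {set T} :=
  if k is k'.+1 then ball k' x :|: [set y | [exists z in ball k' x, e z y]]
  else [set x].

(* distance: least k < #|T| with y in ball k x (well-defined for connected graphs) *)
Definition dist (x y : T) : nat := find (fun k => y \in ball k x) (iota 0 #|T|).

Definition ecc (x : T) : nat := \max_(y : T) dist x y.

Definition deg (x : T) : nat := #|[set y | e x y]|.

Definition connected_graph := forall x y : T, connect e x y.

Definition nedges : nat := #|[set pr : T * T | e pr.1 pr.2]|./2.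

Definition is_tree := simple_graph /\ connected_graph /\ nedges = #|T| - 1.

Definition has_bipartition (p q : nat) :=
  exists A : {set T}, [/\ #|A| = p, #|~: A| = q &
    forall u v, e u v -> (u \in A) != (v \in A)].

Definition xi_ee : rat := \sum_(x : T) ((deg x)%:R / (ecc x)%:R)%R.
End Graphs.

(* P_2(a,b) on vertices 'I_(a+b+2): 0 = x, 1 = y, 2..a+1 pendant at x,
   a+2..a+b+1 pendant at y *)
Definition P2_base (a b : nat) (i j : 'I_(a + b + 2)) : bool :=
  [|| (val i == 0) && (val j == 1),
      (val i == 0) && (2 <= val j < a + 2) |
      (val i == 1) && (a + 2 <= val j)].

Definition P2 (a b : nat) : rel 'I_(a + b + 2) :=
  fun i j => P2_base i j || P2_base j i.

Definition graph_iso (T1 T2 : finType) (e1 : rel T1) (e2 : rel T2) :=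
  exists f : T1 -> T2, bijective f /\ forall u v, e1 u v = e2 (f u) (f v).

Arguments P2_base a b i j : clear implicits.
Arguments P2 a b : clear implicits.

(* Main.v *)
Require Import Defs.
From mathcomp Require Import all_boot all_order all_algebra.
From mathcomp Require Import zify ring lra.
Import Order.TTheory GRing.Theory Num.Theory.
Set Implicit Arguments. Unset Strict Implicit.

Section G.
Variable T : finType.
Variable e : rel T.

Lemma ballS k x y : (y \in ball e k.+1 x) = (y \in ball e k x) || [exists z in ball e k x, e z y].
Proof. by rewrite /= in_setU inE. Qed.

Lemma ball_mono k m x : (k <= m)%N -> ball e k x \subset ball e m x.
Proof.
elim: m => [|m IH]; first by rewrite leqn0 => /eqP ->.
rewrite leq_eqVlt => /orP [/eqP -> //| H].
apply: subset_trans (IH H) _; apply/subsetP => y Hy; by rewrite ballS Hy.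
Qed.

Lemma dist_ball x y k : (dist e x y <= k)%N -> (k < #|T|)%N -> y \in ball e k x.
Proof.
move=> H1 H2.
have Hd : (dist e x y < size (iota 0 #|T|))%N by rewrite size_iota; lia.
have := nth_find 0 (a := fun k => y \in ball e k x) (s := iota 0 #|T|).
rewrite has_find -/(dist e x y) => /(_ Hd).
rewrite nth_iota; last by rewrite size_iota in Hd.
rewrite add0n => Hb.
exact: (subsetP (ball_mono x H1) _ Hb).
Qed.

Lemma ball_dist x y k : y \in ball e k x -> (k < #|T|)%N -> (dist e x y <= k)%N.
Proof.
move=> Hb Hk; rewrite leqNgt; apply/negP => Hlt.
have := before_find 0 (a := fun k => y \in ball e k x) (s := iota 0 #|T|) Hlt.
by rewrite nth_iota ?add0n ?Hb.
Qed.

Lemma ball0E x y : (y \in ball e 0 x) = (y == x).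
Proof. by rewrite /= inE. Qed.

Lemma ball1E x y : (y \in ball e 1 x) = (y == x) || e x y.
Proof.
rewrite ballS ball0E; congr (_ || _); apply/existsP/idP => [[z /andP [Hz Hzy]]|H].
  by move: Hz; rewrite ball0E => /eqP <-.
by exists x; rewrite ball0E eqxx.
Qed.

Lemma ecc_le x k : (k < #|T|)%N -> (forall y, y \in ball e k x) -> (ecc e x <= k)%N.
Proof. move=> Hk H; apply/bigmax_leqP => y _; exact: ball_dist. Qed.

Lemma ecc_ball x k y : (ecc e x <= k)%N -> (k < #|T|)%N -> y \in ball e k x.
Proof. move=> H Hk; apply: dist_ball => //; apply: leq_trans H; exact: leq_bigmax. Qed.

End G.

Section C.
Variable T : finType.
Variable e : rel T.

Lemma degE x : deg e x = \sum_y (e x y : nat).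
Proof. by rewrite /deg -sum1dep_card big_mkcond. Qed.

Lemma cardE_sum : #|[set pr : T * T | e pr.1 pr.2]| = \sum_x \sum_y (e x y : nat).
Proof.
rewrite -sum1dep_card big_mkcond /= pair_big /=.
by apply: eq_bigr => -[a b] _.
Qed.

Hypothesis sym : symmetric e.
Hypothesis irr : irreflexive e.

Lemma sum_even : \sum_x \sum_y (e x y : nat) =
   2 * \sum_x \sum_y ((e x y && (enum_rank x < enum_rank y))%N : nat).
Proof.
have H : forall x y, (e x y : nat) = ((e x y && (enum_rank x < enum_rank y))%N : nat)
     + ((e y x && (enum_rank y < enum_rank x))%N : nat).
  move=> x y; rewrite (sym y x).
  case Exy: (e x y) => //=.
  have Hne : enum_rank x != enum_rank y.
    apply/negP => /eqP /enum_rank_inj Hxy; by rewrite Hxy irr in Exy.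
  move: Hne; rewrite neq_ltn; case: ltngtP => //.
under eq_bigr => x _ do under eq_bigr => y _ do rewrite H.
under eq_bigr => x _ do rewrite big_split /=.
rewrite big_split /= [X in (_ + X)%N]exchange_big /=.
by rewrite mul2n addnn.
Qed.

Lemma degsum : nedges e = (#|T| - 1)%N -> \sum_x deg e x = (2 * (#|T| - 1))%N.
Proof.
rewrite /nedges cardE_sum sum_even => H.
under eq_bigr => x _ do rewrite degE.
by rewrite sum_even -H mul2n doubleK mul2n.
Qed.
End C.

Section M.
Variable T : finType.
Variable e : rel T.
Variable A : {set T}.
Variables p q : nat.
Hypothesis sym : symmetric e.
Hypothesis irr : irreflexive e.
Hypothesis hA : #|A| = p.
Hypothesis hAc : #|~: A| = q.
Hypothesis hp : (2 < p)%N.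
Hypothesis hq : (2 < q)%N.
Hypothesis bip : forall u v, e u v -> (u \in A) != (v \in A).

Lemma cardTpq : #|T| = (p + q)%N.
Proof. by rewrite -hA -hAc -(cardsC A). Qed.

Lemma bipE u v : e u v -> (v \in A) = ~~ (u \in A).
Proof. by move/bip; case: (u \in A); case: (v \in A). Qed.

Lemma pick_same x : exists y, (y != x) && ((y \in A) == (x \in A)).
Proof.
set S := [set y | (y \in A) == (x \in A)].
have HS : (2 < #|S|)%N.
  case Hx: (x \in A).
    have -> : S = A by apply/setP => y; rewrite inE Hx; case: (y \in A).
    by rewrite hA.
  have -> : S = ~: A by apply/setP => y; rewrite !inE Hx; case: (y \in A).
  by rewrite hAc.
have : (0 < #|S :\ x|)%N.
  have := cardsD1 x S; lia.
case/card_gt0P => y; rewrite !inE => /andP [H1 H2]; exists y; by rewrite H1.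
Qed.

Lemma in_ball1 x y : (y == x) || e x y -> y \in ball e 1 x.
Proof. by rewrite ball1E. Qed.

Lemma ball_step k x y z : y \in ball e k x -> e y z -> z \in ball e k.+1 x.
Proof. move=> Hy Hyz; rewrite ballS; apply/orP; right; apply/existsP; exists y; by rewrite Hy. Qed.

Lemma ball_le k m x y : (k <= m)%N -> y \in ball e k x -> y \in ball e m x.
Proof. move=> H Hy; exact: (subsetP (ball_mono e x H) _ Hy). Qed.

Lemma ecc_ge2 x : (2 <= ecc e x)%N.
Proof.
rewrite ltnNge; apply/negP => H.
have [y /andP [Hyx Hs]] := pick_same x.
have := ecc_ball y H; rewrite cardTpq => /(_ ltac:(lia)).
rewrite ball1E (negbTE Hyx) /= => /bipE.
by move/eqP: Hs => ->; case: (x \in A).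
Qed.

Lemma ball2_inv x y : y \in ball e 2 x -> [|| y == x, e x y | [exists z, e x z && e z y]].
Proof.
rewrite ballS ball1E -orbA => /orP [->//|/orP [->|]]; rewrite ?orbT //.
case/existsP => z /andP [Hz Hzy].
move: Hz; rewrite ball1E => /orP [/eqP Hz|Hz].
  by rewrite -Hz Hzy orbT.
by apply/orP; right; apply/orP; right; apply/existsP; exists z; rewrite Hz.
Qed.

End M.

Section CaseA.
Variable T : finType.
Variable e : rel T.
Variable A : {set T}.
Variables p q : nat.
Hypothesis sym : symmetric e.
Hypothesis irr : irreflexive e.
Hypothesis hA : #|A| = p.
Hypothesis hAc : #|~: A| = q.
Hypothesis hp : (2 < p)%N.
Hypothesis hq : (2 < q)%N.
Hypothesis bip : forall u v, e u v -> (u \in A) != (v \in A).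
Hypothesis hsum : \sum_x deg e x = (2 * (#|T| - 1))%N.
Variables u v : T.
Hypothesis euv : e u v.
Hypothesis hu : (ecc e u <= 2)%N.
Hypothesis hv : (ecc e v <= 2)%N.

Let cT := cardTpq hA hAc.
Let bE := bipE bip.

Lemma uv_side : (v \in A) = ~~ (u \in A).
Proof. exact: bE. Qed.

Lemma side2 x z w : e x z -> e z w -> (w \in A) = (x \in A).
Proof. by move=> Hxz Hzw; rewrite (bE Hzw) (bE Hxz) negbK. Qed.

Lemma A1 w : [|| w == u, w == v, e u w | e v w].
Proof.
have H1 := ball2_inv (ecc_ball w hu ltac:(rewrite cT; lia)).
have H2 := ball2_inv (ecc_ball w hv ltac:(rewrite cT; lia)).
case/orP: H1 => [->//|/orP [->|H1]]; rewrite ?orbT //.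
case/orP: H2 => [->|/orP [->|H2]]; rewrite ?orbT //.
case/existsP: H1 => z1 /andP [Ha Hb]; case/existsP: H2 => z2 /andP [Hc Hd].
have := side2 Ha Hb; rewrite (side2 Hc Hd) uv_side; by case: (u \in A).
Qed.

Lemma A2 w : e u w -> e v w -> False.
Proof. by move=> /bE H1 /bE; rewrite H1 uv_side; case: (u \in A). Qed.

Lemma u_ne_v : u != v.
Proof. by apply/negP => /eqP Huv; move: euv; rewrite Huv irr. Qed.

Definition leaf w := (w != u) && (w != v).
Definition cen w := if e u w then u else v.

Lemma cen_adj w : leaf w -> e w (cen w).
Proof.
move=> /andP [H1 H2]; rewrite /cen; case Hu: (e u w); first by rewrite sym.
by have := A1 w; rewrite (negbTE H1) (negbTE H2) Hu /= sym.
Qed.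

Lemma deg_ge1 w : leaf w -> (1 <= deg e w)%N.
Proof. move/cen_adj => H; rewrite /deg; apply/card_gt0P; exists (cen w); by rewrite inE. Qed.

Lemma deguv : (#|T| <= deg e u + deg e v)%N.
Proof.
rewrite /deg; apply: leq_trans (leq_card_setU _ _).
rewrite -(cardsT T) subset_leq_card //; apply/subsetP => w _.
rewrite !inE; have := A1 w; case/or4P => [/eqP->|/eqP->|->|->]; rewrite ?orbT ?euv //.
by rewrite sym euv orbT.
Qed.

Lemma sum_split : \sum_x deg e x = (deg e u + deg e v + \sum_(x | leaf x) deg e x)%N.
Proof.
rewrite (bigD1 u) //= (bigD1 v) /=; last by rewrite eq_sym u_ne_v.
rewrite addnA; congr (_ + _)%N; apply: eq_bigl => x; rewrite /leaf andbC //.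
Qed.

Lemma card_leaf : #|[set x | leaf x]| = (#|T| - 2)%N.
Proof.
have -> : [set x | leaf x] = ~: [set u; v].
  by apply/setP => x; rewrite !inE /leaf negb_or.
have := cardsC [set u; v]; rewrite cards2 u_ne_v /=; lia.
Qed.

Lemma deg_leaf w : leaf w -> deg e w = 1%N.
Proof.
move=> Hw.
have HR : \sum_(x | leaf x) deg e x = (\sum_(x | leaf x) 1 + \sum_(x | leaf x) (deg e x - 1))%N.
  rewrite -big_split /=; apply: eq_bigr => x Hx; have := deg_ge1 Hx; lia.
have H0 : \sum_(x | leaf x) (deg e x - 1) = 0%N.
  have := hsum; rewrite sum_split HR sum1dep_card card_leaf.
  have := deguv; have := cardTpq hA hAc; lia.
move/eqP: H0; rewrite sum_nat_eq0 => /forallP /(_ w); rewrite Hw /= => /eqP.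
have := deg_ge1 Hw; lia.
Qed.

Lemma degsum_uv : (deg e u + deg e v)%N = #|T|.
Proof.
have HR : \sum_(x | leaf x) deg e x = #|T| - 2.
  rewrite -card_leaf -sum1dep_card; apply: eq_bigr => x; exact: deg_leaf.
have := hsum; rewrite sum_split HR.
have := deguv; have := cardTpq hA hAc; lia.
Qed.

Lemma leaf_nb w y : leaf w -> e w y = (y == cen w).
Proof.
move=> Hw; have := deg_leaf Hw; rewrite /deg => /eqP /cards1P [z Hz].
have : cen w \in [set y | e w y] by rewrite inE cen_adj.
rewrite Hz inE => /eqP Hc.
have : (y \in [set y | e w y]) = (y \in [set z]) by rewrite Hz.
by rewrite !inE Hc.
Qed.

Lemma eccu : ecc e u = 2%N.
Proof. apply/eqP; rewrite eqn_leq hu; exact: (ecc_ge2 hA hAc hp hq bip). Qed.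
Lemma eccv : ecc e v = 2%N.
Proof. apply/eqP; rewrite eqn_leq hv; exact: (ecc_ge2 hA hAc hp hq bip). Qed.

Lemma leaf_ex c d : ((c == u) && (d == v)) || ((c == v) && (d == u)) ->
  exists z, leaf z && (cen z == d).
Proof.
move=> Hcd.
have [y /andP [Hyc Hs]] := pick_same hA hAc hp hq c.
have Hcuv : (c == u) || (c == v) by case/orP: Hcd => /andP [-> _]; rewrite ?orbT.
have Hyd : y != d.
  apply/negP => /eqP Hy; move: Hs; rewrite Hy.
  case/orP: Hcd => /andP [/eqP -> /eqP ->].
    by rewrite uv_side; case: (u \in A).
  by rewrite uv_side; case: (u \in A).
have Hl : leaf y.
  rewrite /leaf; case/orP: Hcd => /andP [/eqP Hc /eqP Hd]; subst c d; by rewrite Hyc Hyd.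
exists y; rewrite Hl /=.
case/orP: Hcd => /andP [/eqP Hc /eqP Hd]; subst c d; rewrite /cen.
  case Hu: (e u y) => //; move/bE: Hu; move/eqP: Hs => ->; by case: (u \in A).
case Hu: (e u y); first by [].
exfalso; have := A1 y; rewrite (negbTE Hyc) (negbTE Hyd) Hu /= => Hvy.
move/bE: Hvy; move/eqP: Hs => ->; by case: (v \in A).
Qed.

Lemma cen_uv w : (cen w == u) || (cen w == v).
Proof. by rewrite /cen; case: (e u w); rewrite eqxx ?orbT. Qed.

Lemma leaf_notcen w : leaf w -> (w != u) && (w != v).
Proof. by []. Qed.

Lemma ecc_leaf w : leaf w -> ecc e w = 3%N.
Proof.
move=> Hw.
set c := cen w.
set d := if c == u then v else u.
have Hcd : ((c == u) && (d == v)) || ((c == v) && (d == u)).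
  rewrite /d; case/orP: (cen_uv w) => /eqP Hc; rewrite -/c in Hc; rewrite Hc ?eqxx //=.
  rewrite [v == u]eq_sym (negbTE u_ne_v) /=; exact: eqxx.
have ecd : e c d.
  by case/orP: Hcd => /andP [/eqP -> /eqP ->]; rewrite ?euv // sym euv.
have Hall : forall y, [|| y == c, y == d, e c y | e d y].
  move=> y; have := A1 y.
  by case/orP: Hcd => /andP [/eqP -> /eqP ->]; case/or4P => ->; rewrite ?orbT.
have cT3 : (3 < #|T|)%N by rewrite cT; lia.
apply/eqP; rewrite eqn_leq; apply/andP; split.
  apply: ecc_le => // y.
  have Hc1 : c \in ball e 1 w by apply: in_ball1; rewrite cen_adj // orbT.
  have Hd2 : d \in ball e 2 w by apply: (ball_step Hc1).
  case/or4P: (Hall y) => [/eqP->|/eqP->|H|H].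
  - exact: (ball_le (k := 1)).
  - exact: (ball_le (k := 2)).
  - exact: (ball_le (k := 2)) (ball_step Hc1 H).
  - exact: (ball_step Hd2 H).
rewrite ltnNge; apply/negP => H2.
have [z /andP [Hz /eqP Hzd]] := leaf_ex Hcd.
have Hcnd : c != d by case/orP: Hcd => /andP [/eqP -> /eqP ->]; rewrite ?u_ne_v // eq_sym u_ne_v.
have Hb := ball2_inv (ecc_ball z H2 ltac:(lia)).
case/or3P: Hb => [/eqP Hzw|Hwz|/existsP [t /andP [Hwt Htz]]].
- by move: Hcnd; rewrite -Hzd Hzw eqxx.
- move: Hwz; rewrite leaf_nb // -/c => /eqP Hzc.
  move: Hz; rewrite /leaf Hzc; case/orP: (cen_uv w) => /eqP; rewrite -/c => ->; rewrite eqxx //= ?andbF; move=> Hf; discriminate Hf.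
- move: Hwt; rewrite leaf_nb // -/c => /eqP Htc; subst t.
  move: Htz; rewrite sym leaf_nb // Hzd => /eqP Hcd'.
  by move: Hcnd; rewrite Hcd' eqxx.
Qed.

Lemma xi_caseA : xi_ee e = ((5 * (#|T|)%:R - 4) / 6 :> rat)%R.
Proof.
Local Open Scope ring_scope.
rewrite /xi_ee (bigD1 u) //= (bigD1 v) /=; last by rewrite eq_sym u_ne_v.
have -> : \sum_(i | (i != u) && (i != v)) ((deg e i)%:R / (ecc e i)%:R : rat)
         = \sum_(i | leaf i) ((1%N)%:R / 3%:R).
  apply: eq_big => [i|i Hi]; first by rewrite /leaf.
  by rewrite deg_leaf // ecc_leaf.
rewrite -mulr_suml -natr_sum sum1dep_card card_leaf eccu eccv.
have Hd := degsum_uv.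
have Hn : (2 <= #|T|)%N by rewrite cT; lia.
rewrite natrB //.
have -> : (deg e v)%:R = (#|T|)%:R - (deg e u)%:R :> rat.
  by rewrite -Hd natrD; ring.
by field.
Qed.

Definition X := if u \in A then v else u.
Definition Y := if u \in A then u else v.
Definition LX := [set w | leaf w && (cen w == X)].
Definition LY := [set w | leaf w && (cen w == Y)].

Lemma XnA : X \notin A.
Proof. rewrite /X; case Hu: (u \in A); by rewrite ?uv_side Hu. Qed.
Lemma YA : Y \in A.
Proof. rewrite /Y; case Hu: (u \in A); by rewrite ?uv_side Hu. Qed.
Lemma XYuv : ((X == u) && (Y == v)) || ((X == v) && (Y == u)).
Proof. by rewrite /X /Y; case: (u \in A); rewrite !eqxx ?orbT. Qed.
Lemma eXY : e X Y.
Proof. by rewrite /X /Y; case: (u \in A); rewrite // sym. Qed.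
Lemma X_ne_Y : X != Y.
Proof. by apply/negP => /eqP H; have := eXY; rewrite H irr. Qed.

Lemma cenXY w : (cen w == X) || (cen w == Y).
Proof.
by case/orP: XYuv => /andP [/eqP -> /eqP ->]; case/orP: (cen_uv w) => ->; rewrite ?orbT.
Qed.

Lemma leafXY w : leaf w = (w != X) && (w != Y).
Proof.
rewrite /leaf; case/orP: XYuv => /andP [/eqP -> /eqP ->] //; by rewrite andbC.
Qed.

Lemma classify w : [|| w == X, w == Y, w \in LX | w \in LY].
Proof.
rewrite !inE; case Hl: (leaf w).
  by case/orP: (cenXY w) => ->; rewrite ?orbT.
move: Hl; rewrite leafXY; case: (w == X) => //=; by case: (w == Y).
Qed.

Lemma LXE : LX = A :\ Y.
Proof.
apply/setP => w; rewrite !inE.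
apply/idP/idP.
  case/andP => Hl /eqP Hc.
  have Hw : e X w by rewrite -Hc sym cen_adj.
  move: Hl; rewrite leafXY => /andP [_ ->] /=.
  by rewrite (bE Hw) XnA.
case/andP => HY HA.
have HX : w != X by apply/negP => /eqP Hw; move: HA; rewrite Hw (negbTE XnA).
have Hl : leaf w by rewrite leafXY HX HY.
rewrite Hl /=; case/orP: (cenXY w) => // /eqP Hc.
have := cen_adj Hl; rewrite Hc => /bE; by rewrite HA YA.
Qed.

Lemma LYE : LY = ~: A :\ X.
Proof.
apply/setP => w; rewrite !inE.
apply/idP/idP.
  case/andP => Hl /eqP Hc.
  have Hw : e Y w by rewrite -Hc sym cen_adj.
  move: Hl; rewrite leafXY => /andP [-> _] /=.
  by rewrite (bE Hw) YA.
case/andP => HX HA.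
have HY : w != Y by apply/negP => /eqP Hw; move: HA; rewrite Hw YA.
have Hl : leaf w by rewrite leafXY HX HY.
rewrite Hl /=; case/orP: (cenXY w) => // /eqP Hc.
have := cen_adj Hl; rewrite Hc => /bE; by rewrite (negbTE HA) (negbTE XnA).
Qed.

Lemma cardLX : #|LX| = (p - 1)%N.
Proof. by rewrite LXE; have := cardsD1 Y A; rewrite YA hA; lia. Qed.
Lemma cardLY : #|LY| = (q - 1)%N.
Proof. by rewrite LYE; have := cardsD1 X (~: A); rewrite !inE XnA hAc; lia. Qed.

Lemma LX_nb w y : w \in LX -> e w y = (y == X).
Proof. rewrite inE => /andP [Hl /eqP Hc]; by rewrite leaf_nb // Hc. Qed.
Lemma LY_nb w y : w \in LY -> e w y = (y == Y).
Proof. rewrite inE => /andP [Hl /eqP Hc]; by rewrite leaf_nb // Hc. Qed.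

Lemma LX_X w : w \in LX -> w != X.
Proof. by rewrite inE leafXY => /andP [/andP [-> _] _]. Qed.
Lemma LX_Y w : w \in LX -> w != Y.
Proof. by rewrite inE leafXY => /andP [/andP [_ ->] _]. Qed.
Lemma LY_X w : w \in LY -> w != X.
Proof. by rewrite inE leafXY => /andP [/andP [-> _] _]. Qed.
Lemma LY_Y w : w \in LY -> w != Y.
Proof. by rewrite inE leafXY => /andP [/andP [_ ->] _]. Qed.
Lemma LX_LY w : w \in LX -> w \notin LY.
Proof.
rewrite !inE => /andP [_ /eqP ->]; apply/negP => /andP [_ /eqP H].
by move: X_ne_Y; rewrite H eqxx.
Qed.

Definition a := (p - 1)%N.
Definition b := (q - 1)%N.

Definition g w : nat :=
  if w == X then 0%N else if w == Y then 1%N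
  else if w \in LX then (index w (enum LX)).+2
  else (a + 2 + index w (enum LY))%N.

Lemma idxLX w : w \in LX -> (index w (enum LX) < a)%N.
Proof. by move=> H; rewrite /a -cardLX cardE index_mem mem_enum. Qed.
Lemma idxLY w : w \in LY -> (index w (enum LY) < b)%N.
Proof. by move=> H; rewrite /b -cardLY cardE index_mem mem_enum. Qed.

Lemma gX : g X = 0%N. Proof. by rewrite /g eqxx. Qed.
Lemma gY : g Y = 1%N. Proof. by rewrite /g eq_sym (negbTE X_ne_Y) eqxx. Qed.
Lemma gLX w : w \in LX -> g w = (index w (enum LX)).+2.
Proof. by move=> H; rewrite /g (negbTE (LX_X H)) (negbTE (LX_Y H)) H. Qed.
Lemma gLY w : w \in LY -> g w = (a + 2 + index w (enum LY))%N.
Proof. by move=> H; rewrite /g (negbTE (LY_X H)) (negbTE (LY_Y H)); case: ifP => // /LX_LY; rewrite H. Qed.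

Lemma g_lt w : (g w < a + b + 2)%N.
Proof.
case/or4P: (classify w) => [/eqP->|/eqP->|H|H].
- by rewrite gX; lia.
- by rewrite gY; lia.
- by rewrite gLX //; have := idxLX H; lia.
- by rewrite gLY //; have := idxLY H; lia.
Qed.

Lemma g0 w : g w = 0%N -> w = X.
Proof.
case/or4P: (classify w) => [/eqP->|/eqP->|H|H] //.
- by rewrite gY.
- by rewrite gLX.
- by rewrite gLY //; lia.
Qed.
Lemma g1 w : g w = 1%N -> w = Y.
Proof.
case/or4P: (classify w) => [/eqP->|/eqP->|H|H] //.
- by rewrite gX.
- by rewrite gLX.
- by rewrite gLY //; lia.
Qed.
Lemma g2 w : (2 <= g w < a + 2)%N -> w \in LX.
Proof.
case/or4P: (classify w) => [/eqP->|/eqP->|H|H] //.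
- by rewrite gX.
- by rewrite gY.
- by rewrite gLY //; lia.
Qed.
Lemma g3 w : (a + 2 <= g w)%N -> w \in LY.
Proof.
case/or4P: (classify w) => [/eqP->|/eqP->|H|H] //.
- by rewrite gX; lia.
- by rewrite gY; lia.
- by rewrite gLX //; have := idxLX H; lia.
Qed.

Lemma g_inj : injective g.
Proof.
move=> w1 w2.
case/or4P: (classify w1) => [/eqP->|/eqP->|H|H] Hg.
- by rewrite gX in Hg; rewrite (g0 (esym Hg)).
- by rewrite gY in Hg; rewrite (g1 (esym Hg)).
- have H2 : w2 \in LX by apply: g2; rewrite -Hg gLX //; have := idxLX H; lia.
  move: Hg; rewrite !gLX // => -[] Hi.
  have E1 : nth w1 (enum LX) (index w1 (enum LX)) = w1 by rewrite nth_index // mem_enum.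
  have E2 : nth w1 (enum LX) (index w2 (enum LX)) = w2 by rewrite nth_index // mem_enum.
  by rewrite -E1 Hi E2.
- have H2 : w2 \in LY by apply: g3; rewrite -Hg gLY //; lia.
  move: Hg; rewrite !gLY // => /eqP; rewrite eqn_add2l => /eqP Hi.
  have E1 : nth w1 (enum LY) (index w1 (enum LY)) = w1 by rewrite nth_index // mem_enum.
  have E2 : nth w1 (enum LY) (index w2 (enum LY)) = w2 by rewrite nth_index // mem_enum.
  by rewrite -E1 Hi E2.
Qed.

Definition Bg w1 w2 := [|| (g w1 == 0%N) && (g w2 == 1%N),
   (g w1 == 0%N) && (2 <= g w2 < a + 2)%N | (g w1 == 1%N) && (a + 2 <= g w2)%N].

Lemma Bg_e w1 w2 : Bg w1 w2 -> e w1 w2.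
Proof.
case/or3P => /andP [/eqP H1 H2].
- by rewrite (g0 H1) (g1 (eqP H2)) eXY.
- have H := g2 H2; rewrite (g0 H1) sym; move: H; rewrite inE => /andP [Hl /eqP <-].
  exact: cen_adj.
- have H := g3 H2; rewrite (g1 H1) sym; move: H; rewrite inE => /andP [Hl /eqP <-].
  exact: cen_adj.
Qed.

Lemma e_Bg w1 w2 : e w1 w2 -> Bg w1 w2 || Bg w2 w1.
Proof.
have Hc : forall w y, e w y -> w = X -> Bg w y.
  move=> w y Hwy Hw; subst w; rewrite /Bg gX eqxx /=.
  case/or4P: (classify y) => [/eqP Hy|/eqP Hy|H|H].
  - by move: Hwy; rewrite Hy irr.
  - by rewrite Hy gY.
  - rewrite gLX //; have := idxLX H; lia.
  - by move: Hwy; rewrite sym LY_nb // (negbTE X_ne_Y).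
have Hd : forall w y, e w y -> w = Y -> y \in LY -> Bg w y.
  move=> w y Hwy Hw H; subst w; rewrite /Bg gY /= gLY //; lia.
move=> H.
case/or4P: (classify w1) => [/eqP H1|/eqP H1|H1|H1].
- by rewrite Hc.
- case/or4P: (classify w2) => [/eqP H2|/eqP H2|H2|H2].
  + by rewrite (Hc w2 w1) ?orbT // sym.
  + by move: H; rewrite H1 H2 irr.
  + by move: H; rewrite sym LX_nb // H1 eq_sym (negbTE X_ne_Y).
  + by rewrite Hd.
- have H2 : w2 = X by apply/eqP; rewrite -(LX_nb _ H1).
  by rewrite (Hc w2 w1) ?orbT // sym.
- have H2 : w2 = Y by apply/eqP; rewrite -(LY_nb _ H1).
  by rewrite (Hd w2 w1) ?orbT // sym.
Qed.

Lemma iso_caseA : graph_iso e (P2 (p - 1)%N (q - 1)%N).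
Proof.
exists (fun w => (Ordinal (g_lt w) : 'I_((p - 1) + (q - 1) + 2))).
split.
  apply: inj_card_bij.
    by move=> w1 w2 [] /g_inj.
  by rewrite card_ord cT; lia.
move=> w1 w2.
have -> : P2 (p - 1) (q - 1) (Ordinal (g_lt w1)) (Ordinal (g_lt w2)) = Bg w1 w2 || Bg w2 w1 by [].
apply/idP/idP; first exact: e_Bg.
by case/orP => /Bg_e // ; rewrite sym.
Qed.

End CaseA.

Local Open Scope ring_scope.

Lemma inv_le (k m : nat) : (0 < k)%N -> (k <= m)%N -> (m%:R : rat)^-1 <= (k%:R)^-1.
Proof.
move=> Hk Hkm; rewrite lef_pV2 ?posrE ?ltr0n ?ler_nat //; lia.
Qed.

Lemma pair_bound (a b : nat) : (2 <= a)%N -> (2 <= b)%N -> ~~ ((a <= 2)%N && (b <= 2)%N) ->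
  (a%:R : rat)^-1 + (b%:R)^-1 <= 5%:R / 6%:R.
Proof.
move=> Ha Hb Hn.
have Ha2 := inv_le (isT : (0 < 2)%N) Ha.
have Hb2 := inv_le (isT : (0 < 2)%N) Hb.
case: (leqP a 2) => Ha' .
  have Hb3 : (3 <= b)%N by move: Hn; rewrite Ha' /=; lia.
  have := inv_le (isT : (0 < 3)%N) Hb3.
  move: Ha2 => H1 H2; lra.
have := inv_le (isT : (0 < 3)%N) Ha'.
move: Hb2 => H1 H2; lra.
Qed.

Section B.
Variable T : finType.
Variable e : rel T.
Hypothesis sym : symmetric e.
Hypothesis ge2 : forall x, (2 <= ecc e x)%N.
Hypothesis HB : forall u v, e u v -> ~~ ((ecc e u <= 2)%N && (ecc e v <= 2)%N).

Lemma xi_caseB : xi_ee e *+ 2 <= 5%:R / 6%:R * (\sum_x deg e x)%:R.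
Proof.
have Hxi : xi_ee e = \sum_x \sum_y (e x y)%:R * (ecc e x)%:R^-1.
  rewrite /xi_ee; apply: eq_bigr => x _; rewrite degE natr_sum mulr_suml //.
have Hxi2 : xi_ee e = \sum_x \sum_y (e x y)%:R * (ecc e y)%:R^-1.
  rewrite Hxi exchange_big /=; apply: eq_bigr => x _; apply: eq_bigr => y _.
  by rewrite sym.
rewrite mulr2n {1}Hxi Hxi2 -big_split /=.
rewrite natr_sum mulr_sumr; apply: ler_sum => x _.
rewrite -big_split /=.
under eq_bigr => y _ do rewrite -mulrDr.
rewrite degE natr_sum mulr_sumr; apply: ler_sum => y _.
case Hxy: (e x y); last by rewrite !mul0r mulr0.
rewrite !mul1r mulr1; apply: pair_bound => //; exact: HB.
Qed.
End B.

Section Iso.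
Variable T : finType.
Variable e : rel T.
Hypothesis sym : symmetric e.

Lemma ecc2_of u v : e u v -> (2 < #|T|)%N ->
  (forall y, [|| y == u, y == v, e u y | e v y]) -> (ecc e u <= 2)%N.
Proof.
move=> Huv HT Hall; apply: ecc_le => // y.
have Hv1 : v \in ball e 1 u by apply: in_ball1; rewrite Huv orbT.
case/or4P: (Hall y) => [/eqP->|/eqP->|H|H].
- by apply: (ball_le (k := 1)) => //; apply: in_ball1; rewrite eqxx.
- exact: (ball_le (k := 1)).
- by apply: (ball_le (k := 1)) => //; apply: in_ball1; rewrite H orbT.
- exact: (ball_step Hv1).
Qed.

Lemma iso_uv (a b : nat) : graph_iso e (P2 a b) -> (2 < #|T|)%N ->
  exists u v, [&& e u v, (ecc e u <= 2)%N & (ecc e v <= 2)%N].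
Proof.
move=> [f [[g fK gK] Hf]] HT.
have H0 : (0 < a + b + 2)%N by lia.
have H1 : (1 < a + b + 2)%N by lia.
set o0 := Ordinal H0; set o1 := Ordinal H1.
have Huv : e (g o0) (g o1) by rewrite Hf !gK.
have Hall : forall y, [|| y == g o0, y == g o1, e (g o0) y | e (g o1) y].
  move=> y; rewrite !Hf !gK -(fK y); set j := f y; rewrite gK.
  have [Hj0|Hj0] := eqVneq (val j) 0%N.
    by rewrite (_ : j = o0) ?eqxx //; apply: val_inj.
  have [Hj1|Hj1] := eqVneq (val j) 1%N.
    by rewrite (_ : j = o1) ?eqxx ?orbT //; apply: val_inj.
  apply/orP; right; apply/orP; right.
  rewrite /P2 /P2_base /=; move: Hj0 Hj1; lia.
exists (g o0), (g o1); rewrite Huv /=.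
rewrite (ecc2_of Huv HT Hall) /=.
apply: (ecc2_of (u := g o1) (v := g o0)) => //; first by rewrite sym.
move=> y; case/or4P: (Hall y) => ->; rewrite ?orbT //.
Qed.
End Iso.

Local Open Scope ring_scope.

Theorem theorem4p6 (T : finType) (e : rel T) (p q n : nat) :
  is_tree e -> (2 < p)%N -> (p <= q)%N -> (p + q)%N = n -> #|T| = n ->
  has_bipartition e p q ->
  xi_ee e <= (5 * n%:R - 4) / 6 /\
  (xi_ee e = (5 * n%:R - 4) / 6 <-> graph_iso e (P2 (p - 1)%N (q - 1)%N)).
Proof.
move=> [[sym irr] [_ hed]] hp hpq hn hT [A [hA hAc bip]].
have hq : (2 < q)%N by lia.
have hsum := degsum sym irr hed.
have ge2 := ecc_ge2 hA hAc hp hq bip.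
case: (boolP [exists u, exists v, [&& e u v, (ecc e u <= 2)%N & (ecc e v <= 2)%N]]).
  case/existsP => u /existsP [v /and3P [euv hu hv]].
  have Hxi := xi_caseA sym irr hA hAc hp hq bip hsum euv hu hv.
  have Hiso := iso_caseA sym irr hA hAc hp hq bip hsum euv hu hv.
  rewrite Hxi hT; split => //.
move=> HN.
have HB : forall u v, e u v -> ~~ ((ecc e u <= 2)%N && (ecc e v <= 2)%N).
  move=> u v Huv; apply/negP => /andP [H1 H2]; move/negP: HN; apply.
  by apply/existsP; exists u; apply/existsP; exists v; rewrite Huv H1 H2.
have Hb := xi_caseB sym ge2 HB.
rewrite hsum hT in Hb.
have Hn1 : (1 <= n)%N by lia.
rewrite mulnBr muln1 natrB ?natrM in Hb; last by lia.
have Hlt : xi_ee e < (5 * n%:R - 4) / 6.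
  move: Hb; rewrite mulr2n => Hb; lra.
split; first exact: ltW.
split.
  by move=> Heq; move: Hlt; rewrite Heq ltxx.
move=> Hiso; have := iso_uv sym Hiso ltac:(lia).
case=> u [v /and3P [H1 H2 H3]].
by move: (HB u v H1); rewrite H2 H3.
Qed.
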